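(* Fix $\boldsymbol{x}\in\mathcal{R}_r$ and consider the second-order cone program, in the variable $(\boldsymbol{u},d,t)\in\mathbb{R}^m\times\mathbb{R}\times\mathbb{R}$, $$\min\ t\quad\text{s.t.}\quad \Big\|E\begin{bmatrix}\boldsymbol{u}\\ d\end{bmatrix}\Big\|_2\le t,\qquad \hat{\dot V}(\boldsymbol{x},\boldsymbol{u})+m_r^V+\beta_r\sigma_r^V+\lambda V(\boldsymbol{x})\le d,\qquad \|A_r^h(\boldsymbol{x})\boldsymbol{u}+\boldsymbol{b}_r^h(\boldsymbol{x})\|_2\le \boldsymbol{c}_r^h(\boldsymbol{x})\boldsymbol{u}+d_r^h(\boldsymbol{x}),$$ with $E=\operatorname{diag}(1,\dots,1,\sqrt\rho)$. If this program is feasible, then $$1-\frac{1}{\beta_r^2}\boldsymbol{\phi}_r\,\Sigma_r^h(\boldsymbol{x})^{-1}\boldsymbol{\phi}_r^T\le 0,\qquad\text{where } \boldsymbol{\phi}_r=\begin{bmatrix}\varphi_r^{hf}+\mu_r^{h1} & \boldsymbol{c}_r^h(\boldsymbol{x})\end{bmatrix}\in\mathbb{R}^{1\times(m+1)}.$$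
   Context: Setting: switching system $\dot{\boldsymbol{x}}=\sum_{r=1}^R\delta_r(f_r(\boldsymbol{x})+g_r(\boldsymbol{x})\boldsymbol{u})$, $\boldsymbol{x}\in\mathcal{X}\subset\mathbb{R}^n$, $\boldsymbol{u}\in\mathbb{R}^m$, with pairwise disjoint regions $\mathcal{R}_r$ covering $\mathcal{X}$ and $\delta_r$ the indicator of $\mathcal{R}_r$; nominal model $\dot{\boldsymbol{x}}=\hat f(\boldsymbol{x})+\hat g(\boldsymbol{x})\boldsymbol{u}$; continuously differentiable CLF $V$ and CBF $h$ with nominal derivative $\hat{\dot V}=L_{\hat f}V+L_{\hat g}V\boldsymbol{u}$; constants $\rho>0$, $\lambda>0$, $\beta_r>0$. Write $\boldsymbol{y}=[1,\boldsymbol{u}^T]^T$. For region $r$, Gaussian-process posteriors (zero prior mean, kernel $\boldsymbol{y}^T\operatorname{diag}(k_r^1(\boldsymbol{x},\boldsymbol{x}'),\dots,k_r^{m+1}(\boldsymbol{x},\boldsymbol{x}'))\boldsymbol{y}'$ with positive-definite base kernels, noise variance $\sigma_n^2>0$) give for the CLF residual a mean $m_r^V=\boldsymbol{\mu}_r^V(\boldsymbol{x})\boldsymbol{y}$ and standard deviation $\sigma_r^V=\sqrt{\boldsymbol{y}^T\Sigma_r^V(\boldsymbol{x})\boldsymbol{y}}$, and for the CBF residual a mean $\boldsymbol{\mu}_r^h(\boldsymbol{x})\boldsymbol{y}$ ($\boldsymbol{\mu}_r^h\in\mathbb{R}^{1\times(m+1)}$) and standard deviation $\sqrt{\boldsymbol{y}^T\Sigma_r^h(\boldsymbol{x})\boldsymbol{y}}$,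 where the posterior covariance matrix $\Sigma_r^h(\boldsymbol{x})=\Lambda_r(\boldsymbol{x},\boldsymbol{x})-\bar K_r(K_r+\sigma_n^2I)^{-1}\bar K_r^T$ is taken (as in the paper) to be symmetric positive definite. Write $\mu_r^{h1}$ for the first entry and $\boldsymbol{\mu}_r^{hm}$ for the last $m$ entries of $\boldsymbol{\mu}_r^h$. Let $L_r$ satisfy $L_r^TL_r=\Sigma_r^h(\boldsymbol{x})$, with first column $\boldsymbol{l}_r^1$ and last $m$ columns $L_r^m$. Let $\boldsymbol{\varphi}_r^h=[L_{f_r}h-L_{\hat f}h,\ L_{g_r}h-L_{\hat g}h]\in\mathbb{R}^{1\times(m+1)}$ with first entry $\varphi_r^{hf}$ and last $m$ entries $\boldsymbol{\varphi}_r^{hg}$. Define $A_r^h=\beta_rL_r^m$, $\boldsymbol{b}_r^h=\beta_r\boldsymbol{l}_r^1$, $\boldsymbol{c}_r^h=\boldsymbol{\varphi}_r^{hg}+\boldsymbol{\mu}_r^{hm}$, $d_r^h=\varphi_r^{hf}+\mu_r^{h1}$. *)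

(* Defs.v *)
From HB Require Import structures.
From mathcomp Require Import all_boot all_order all_algebra.
Set Implicit Arguments. Unset Strict Implicit. Unset Printing Implicit Defensive.
Import Order.TTheory GRing.Theory Num.Theory.
Local Open Scope ring_scope.

Definition norm2 {R : rcfType} {k : nat} (v : 'cV[R]_k) : R :=
  Num.sqrt (\sum_(i < k) v i 0 ^+ 2).

Definition yvec {R : rcfType} {m : nat} (u : 'cV[R]_m) : 'cV[R]_(1 + m) :=
  col_mx 1 u.

Definition Emat {R : rcfType} (m : nat) (rho : R) : 'M[R]_(m + 1) :=
  diag_mx (row_mx (const_mx 1) (Num.sqrt rho)%:M).

(* A_r^h = beta L^m, b_r^h = beta l^1, c_r^h = phi^hg + mu^hm,
   d_r^h = phi^hf + mu^h1 *)
Definition Ah {R : rcfType} {k m : nat} (beta : R) (L : 'M[R]_(k, 1 + m))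
  : 'M[R]_(k, m) := beta *: rsubmx L.
Definition bh {R : rcfType} {k m : nat} (beta : R) (L : 'M[R]_(k, 1 + m))
  : 'cV[R]_k := beta *: lsubmx L.
Definition ch {R : rcfType} {m : nat} (phih muh : 'rV[R]_(1 + m)) : 'rV[R]_m :=
  rsubmx phih + rsubmx muh.
Definition dh {R : rcfType} {m : nat} (phih muh : 'rV[R]_(1 + m)) : R :=
  (lsubmx phih) 0 0 + (lsubmx muh) 0 0.

Definition phivec {R : rcfType} {m : nat} (phih muh : 'rV[R]_(1 + m))
  : 'rV[R]_(1 + m) :=
  row_mx (((lsubmx phih) 0 0 + (lsubmx muh) 0 0)%:M) (ch phih muh).

(* Feasibility of the SOCP at the fixed state x.
   LfV = L_{\hat f}V(x), LgV = L_{\hat g}V(x), muV = mu_r^V(x),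
   SigV = Sigma_r^V(x), Vx = V(x). *)
Definition socp_feasible {R : rcfType} {k m : nat} (rho lam beta : R)
  (LfV : R) (LgV : 'rV[R]_m) (muV : 'rV[R]_(1 + m)) (SigV : 'M[R]_(1 + m))
  (Vx : R) (L : 'M[R]_(k, 1 + m)) (phih muh : 'rV[R]_(1 + m)) : Prop :=
  exists (u : 'cV[R]_m) (d t : R),
    [/\ norm2 (Emat m rho *m col_mx u d%:M) <= t,
        LfV + (LgV *m u) 0 0 + (muV *m yvec u) 0 0
          + beta * Num.sqrt (((yvec u)^T *m SigV *m yvec u) 0 0)
          + lam * Vx <= d
      & norm2 (Ah beta L *m u + bh beta L) <= (ch phih muh *m u) 0 0 + dh phih muh].

(* Main.v *)
Require Import Defs.
From HB Require Import structures.
From mathcomp Require Import all_boot all_order all_algebra.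
From mathcomp Require Import ring lra.
Import Order.TTheory GRing.Theory Num.Theory.
Local Open Scope ring_scope.

Section H.
Variable R : rcfType.
Variable n : nat.

Definition bf (S : 'M[R]_n) (v w : 'cV[R]_n) : R := (v^T *m S *m w) 0 0.

Lemma bf_sym S v w : S^T = S -> bf S v w = bf S w v.
Proof.
move=> hS; rewrite /bf.
have -> : (v^T *m S *m w) 0 0 = ((v^T *m S *m w)^T) 0 0 by rewrite [RHS]mxE.
by rewrite !trmx_mul trmxK hS mulmxA.
Qed.

Lemma bf_lin S a c y w :
  bf S (a *: y + c *: w) (a *: y + c *: w) =
  a ^+ 2 * bf S y y + a * c * bf S y w + c * a * bf S w y + c ^+ 2 * bf S w w.
Proof.
rewrite /bf linearD !linearZ /=.
have -> : (a *: y + c *: w)^T = a *: y^T + c *: w^T by rewrite linearD !linearZ.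
rewrite !mulmxDl.
rewrite -!scalemxAl !mxE.
ring.
Qed.

Lemma bf_ge0 S v : (forall v : 'cV[R]_n, v != 0 -> 0 < bf S v v) -> 0 <= bf S v v.
Proof.
move=> hP; have [->|nz] := eqVneq v 0; last exact/ltW/hP.
by rewrite /bf mulmx0 mxE.
Qed.

Lemma bf_cs S y w : S^T = S -> (forall v : 'cV[R]_n, v != 0 -> 0 < bf S v v) ->
  bf S w y ^+ 2 <= bf S w w * bf S y y.
Proof.
move=> hS hP.
have [->|nz] := eqVneq w 0.
  by rewrite /bf !mulmx0 trmx0 !mul0mx !mxE expr0n /= mul0r.
have a0 := hP _ nz.
have := bf_ge0 S (bf S w w *: y + (- bf S w y) *: w) hP.
rewrite bf_lin (bf_sym S y w hS) => h.
have h2 : 0 <= bf S w w * (bf S w w * bf S y y - bf S w y ^+ 2).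
  by move: h; congr (_ <= _); ring.
rewrite -subr_ge0; move: h2; rewrite pmulr_rge0 //.
Qed.
End H.
Arguments bf {R n}.
Arguments bf_cs {R n}.

Theorem corollary2 (R : rcfType) (k m : nat) (rho lam beta : R)
  (LfV : R) (LgV : 'rV[R]_m) (muV : 'rV[R]_(1 + m)) (SigV : 'M[R]_(1 + m))
  (Vx : R) (Sigh : 'M[R]_(1 + m)) (L : 'M[R]_(k, 1 + m))
  (phih muh : 'rV[R]_(1 + m)) :
  0 < rho -> 0 < lam -> 0 < beta ->
  Sigh^T = Sigh ->
  (forall v : 'cV[R]_(1 + m), v != 0 -> 0 < (v^T *m Sigh *m v) 0 0) ->
  L^T *m L = Sigh ->
  socp_feasible rho lam beta LfV LgV muV SigV Vx L phih muh ->
  1 - beta^-2 * (phivec phih muh *m invmx Sigh *m (phivec phih muh)^T) 0 0 <= 0.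
Proof.
move=> rho0 lam0 beta0 hS hP hL [u [d [t [_ _ hc]]]].
set S := Sigh in hS hP hL *.
set phi := phivec phih muh.
set y := yvec u.
have hP' : forall v, v != 0 -> 0 < bf S v v := hP.
have Su : S \in unitmx.
  rewrite unitmxE unitfE; apply/negP => /det0P [v nz hv].
  have : v^T != 0 by rewrite trmx_eq0.
  move/hP'; by rewrite /bf trmxK hv mul0mx mxE ltxx.
set w := invmx S *m phi^T.
have hphi : phi = w^T *m S.
  by rewrite /w trmx_mul trmx_inv hS trmxK mulmxKV.
have eP : (phi *m invmx S *m phi^T) 0 0 = bf S w w.
  by rewrite /bf -hphi /w mulmxA.
have eB : (phi *m y) 0 0 = bf S w y by rewrite /bf -hphi.
have e1 : Ah beta L *m u + bh beta L = beta *: (L *m y).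
  rewrite /Ah /bh /y /yvec -{3}(hsubmxK L) mul_row_col scalerDr addrC.
  by rewrite mulmx1 scalemxAl.
have e2 : (ch phih muh *m u) 0 0 + dh phih muh = (phi *m y) 0 0.
  rewrite /phi /phivec /y /yvec mul_row_col [in RHS]mxE addrC; congr (_ + _).
  by rewrite mulmx1 mxE /= mulr1n.
have e3 : norm2 (beta *: (L *m y)) ^+ 2 = beta ^+ 2 * bf S y y.
  rewrite /norm2 sqr_sqrtr; last by apply: sumr_ge0 => i _; apply: sqr_ge0.
  rewrite /bf -hL.
  have -> : y^T *m (L^T *m L) *m y = (L *m y)^T *m (L *m y)
    by rewrite trmx_mul !mulmxA.
  rewrite [in RHS]mxE mulr_sumr; apply: eq_bigr => i _; rewrite !mxE; ring.
have ynz : y != 0.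
  by rewrite /y /yvec col_mx_eq0 negb_and oner_eq0.
have q0 := hP' _ ynz.
have h1 : beta ^+ 2 * bf S y y <= bf S w y ^+ 2.
  rewrite -e3 -eB -e2; rewrite e1 in hc.
  rewrite ler_sqr //; [exact: sqrtr_ge0| exact: le_trans (sqrtr_ge0 _) hc].
have h2 := bf_cs S y w hS hP'.
have h3 : beta ^+ 2 <= bf S w w.
  by rewrite -(ler_pM2r q0); exact: le_trans h1 h2.
rewrite eP subr_le0 mulrC ler_pdivlMr ?exprn_gt0 // mul1r; exact: h3.
Qed.
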